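(* Let $d\ge3$ and suppose $\mathbf z_1,\dots,\mathbf z_d\in\mathbb R^d$ are linearly independent (and $\boldsymbol\alpha_1,\boldsymbol\alpha_2$ are well defined). Then \[|\boldsymbol\alpha_1-\boldsymbol\alpha_2|=\frac{\det\underline\Lambda_{2,d-2}\cdot\det\Lambda_{1,d}}{\det\underline\Lambda_{1,d-1}\cdot\det\underline\Lambda_{2,d-1}}.\]
   Context: $|\cdot|$ is the Euclidean norm. For $\mathbf x=(x_1,\dots,x_d)\in\mathbb R^d$ write $\underline{\mathbf x}=(x_1,\dots,x_{d-1})$. Let $\pi_d=\{\mathbf x\in\mathbb R^d:x_d=1\}$. For vectors $\mathbf z_1,\dots,\mathbf z_d$: $\det\Lambda_{1,d}=|\det(\mathbf z_1,\dots,\mathbf z_d)|$; for $1\le l\le d-1$, $\det\underline\Lambda_{k,l}=|\underline{\mathbf z_k}\wedge\dots\wedge\underline{\mathbf z_{k+l-1}}|$, the $l$-dimensional volume of the parallelepiped spanned by $\underline{\mathbf z_k},\dots,\underline{\mathbf z_{k+l-1}}$. When $\underline{\mathbf z_k},\dots,\underline{\mathbf z_{k+d-2}}$ are linearly independent, $\boldsymbol\alpha_k$ denotes the unique point of $\pi_d$ orthogonal to $\mathbf z_k,\dots,\mathbf z_{k+d-2}$; here $\boldsymbol\alpha_1\perp\mathbf z_1,\dots,\mathbf z_{d-1}$ and $\boldsymbol\alpha_2\perp\mathbf z_2,\dots,\mathbf z_d$. *)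

(* Defs.v *)
(* Ambient dimension d = n.+1 ; vectors are row vectors 'rV[R]_(n.+1).
   Vectors z_1, ..., z_d are given as a function z : nat -> 'rV[R]_(n.+1),
   using the paper's 1-based indices (only z 1, ..., z d are relevant). *)
From HB Require Import structures.
From mathcomp Require Import all_boot all_order all_algebra.
Set Implicit Arguments. Unset Strict Implicit. Unset Printing Implicit Defensive.
Import Order.TTheory GRing.Theory Num.Theory.
Local Open Scope ring_scope.

Definition dotv (R : rcfType) (m : nat) (u v : 'rV[R]_m) : R := (u *m v^T) 0 0.
Definition enorm (R : rcfType) (m : nat) (v : 'rV[R]_m) : R := Num.sqrt (dotv v v).

Definition under (R : rcfType) (n : nat) (x : 'rV[R]_n.+1) : 'rV[R]_n :=
  \row_(j < n) x 0 (widen_ord (leqnSn n) j).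

Definition lastc (R : rcfType) (n : nat) (x : 'rV[R]_n.+1) : R := x 0 ord_max.

Definition vecs_mx (R : rcfType) (m l k : nat) (f : nat -> 'rV[R]_m) : 'M[R]_(l, m) :=
  \matrix_(i < l, j < m) f (k + i)%N 0 j.

(* l-dimensional volume of the parallelepiped spanned by the rows of M:
   |v_1 /\ ... /\ v_l| = sqrt (Gram determinant) *)
Definition pvol (R : rcfType) (l m : nat) (M : 'M[R]_(l, m)) : R :=
  Num.sqrt (\det (M *m M^T)).

(* det underline-Lambda_{k,l} = | under z_k /\ ... /\ under z_{k+l-1} | *)
Definition detLu (R : rcfType) (n : nat) (z : nat -> 'rV[R]_n.+1) (k l : nat) : R :=
  pvol (vecs_mx l k (fun i => under (z i))).

(* det Lambda_{1,d} = |det(z_1, ..., z_d)| *)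
Definition detL1d (R : rcfType) (n : nat) (z : nat -> 'rV[R]_n.+1) : R :=
  `|\det (vecs_mx n.+1 1 z)|.

(* Main.v *)
Require Import Defs.
From HB Require Import structures.
From mathcomp Require Import all_boot all_order all_algebra.
From mathcomp Require Import ring lra zify.
Set Implicit Arguments. Unset Strict Implicit. Unset Printing Implicit Defensive.
Import Order.TTheory GRing.Theory Num.Theory.
Local Open Scope ring_scope.

Section L.
Variable R : rcfType.

Lemma dotvE k (x y : 'rV[R]_k) : dotv x y = \sum_i x 0 i * y 0 i.
Proof. by rewrite /dotv !mxE; apply: eq_bigr => i _; rewrite mxE. Qed.

Lemma dotvC k (x y : 'rV[R]_k) : dotv x y = dotv y x.
Proof. by rewrite !dotvE; apply: eq_bigr => i _; rewrite mulrC. Qed.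

Lemma dotvBl k (x y w : 'rV[R]_k) : dotv (x - y) w = dotv x w - dotv y w.
Proof. by rewrite !dotvE -sumrB; apply: eq_bigr => i _; rewrite !mxE mulrBl. Qed.

Lemma dotv_split k (x y : 'rV[R]_k.+1) :
  dotv x y = dotv (under x) (under y) + lastc x * lastc y.
Proof.
rewrite !dotvE big_ord_recr /=; congr (_ + _).
by apply: eq_bigr => i _; rewrite !mxE.
Qed.

Lemma under_sub k (x y : 'rV[R]_k.+1) : under (x - y) = under x - under y.
Proof. by apply/rowP => j; rewrite !mxE. Qed.

Lemma lastc_sub k (x y : 'rV[R]_k.+1) : lastc (x - y) = lastc x - lastc y.
Proof. by rewrite /lastc !mxE. Qed.

Lemma dotv_eq0 k (y : 'rV[R]_k) : dotv y y = 0 -> y = 0.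
Proof.
rewrite dotvE => /eqP; rewrite psumr_eq0 => [/allP H|i _]; last by rewrite -expr2 sqr_ge0.
apply/rowP => i; rewrite mxE.
have := H i (mem_index_enum _); rewrite /= -expr2 sqrf_eq0 => /eqP ->.
by rewrite ?ord1.
Qed.

Lemma vecs_mulT l l' m k k' (f g : nat -> 'rV[R]_m) i j :
  (vecs_mx l k f *m (vecs_mx l' k' g)^T) i j = dotv (f (k + i)%N) (g (k' + j)%N).
Proof. by rewrite dotvE !mxE; apply: eq_bigr => t _; rewrite !mxE. Qed.

Lemma vecs_rc l l' m k k' (f g : nat -> 'rV[R]_m) :
  row' 0 (col' 0 (vecs_mx l.+1 k f *m (vecs_mx l'.+1 k' g)^T)) =
  vecs_mx l k.+1 f *m (vecs_mx l' k'.+1 g)^T.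
Proof.
apply/matrixP => i j; rewrite !mxE; apply: eq_bigr => t _; by rewrite !mxE /= /bump /= !add1n !addSn !addnS.
Qed.
Lemma vecs_mx_eq l m k (f g : nat -> 'rV[R]_m) :
  (forall i, (i < l)%N -> f (k + i)%N = g (k + i)%N) -> vecs_mx l k f = vecs_mx l k g.
Proof. by move=> H; apply/matrixP => i j; rewrite !mxE H. Qed.

Lemma det_row1 k (A : 'M[R]_k) i0 j0 :
  (forall j, j != j0 -> A i0 j = 0) -> \det A = A i0 j0 * cofactor A i0 j0.
Proof.
move=> H; rewrite (expand_det_row A i0) (bigD1 j0) //= big1 ?addr0 //.
by move=> j /H ->; rewrite mul0r.
Qed.

Lemma det_col1 k (A : 'M[R]_k) i0 j0 :
  (forall i, i != i0 -> A i j0 = 0) -> \det A = A i0 j0 * cofactor A i0 j0.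
Proof.
move=> H; rewrite (expand_det_col A j0) (bigD1 i0) //= big1 ?addr0 //.
by move=> j /H ->; rewrite mul0r.
Qed.

Lemma cofactor00 k (A : 'M[R]_k.+1) : cofactor A 0 0 = \det (row' 0 (col' 0 A)).
Proof. by rewrite /cofactor /= expr0 mul1r. Qed.

Lemma pvol_sq k (A : 'M[R]_k) : pvol A = `|\det A|.
Proof. by rewrite /pvol det_mulmx det_tr -expr2 sqrtr_sqr. Qed.


Lemma gram_ne0 m (U : 'M[R]_(m.+2)) (W : 'M[R]_(m.+1, m.+2)) :
  row_free U -> (forall i j, W i j = U (lift 0 i) j) -> \det (W *m W^T) != 0.
Proof.
move=> hU HW; apply/negP => /eqP H0.
have : ~~ row_free (W *m W^T) by rewrite row_free_unit unitmxE unitfE H0 eqxx.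
rewrite -kermx_eq0 => /rowV0Pn [x /sub_kermxP hx xn0].
have hy : dotv (x *m W) (x *m W) = 0.
  by rewrite /dotv trmx_mul !mulmxA -(mulmxA x W) hx !mul0mx mxE.
have y0 := dotv_eq0 hy.
pose S : 'M[R]_(m.+1, m.+2) := \matrix_(i, j) (j == lift 0 i)%:R.
have SU : S *m U = W.
  apply/matrixP => i j; rewrite mxE (bigD1 (lift 0 i)) //= big1 ?addr0.
    by rewrite mxE eqxx mul1r HW.
  by move=> k /negbTE hk; rewrite mxE hk mul0r.
have : x *m S *m U == 0 by rewrite -mulmxA SU y0.
rewrite mulmx_free_eq0 // => /eqP xS0.
move/negP: xn0; apply; apply/eqP/rowP => i; rewrite [RHS]mxE.
have := congr1 (fun M : 'rV[R]_(m.+2) => M 0 (lift 0 i)) xS0; rewrite !mxE (bigD1 i) //= big1 ?addr0.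
  by rewrite mxE eqxx mulr1.
by move=> k hk; rewrite mxE (inj_eq lift_inj) eq_sym (negbTE hk) mulr0.
Qed.

End L.

Lemma ord_ne0 k (j : 'I_k.+1) : j != 0 -> (0 < j)%N.
Proof. by move=> hj; rewrite lt0n; move: hj; apply: contra => /eqP h; apply/eqP/val_inj. Qed.

Theorem lemma5 (R : rcfType) (n : nat) (hn : (2 <= n)%N)
  (z : nat -> 'rV[R]_n.+1)
  (hind : row_free (vecs_mx n.+1 1 z))
  (hwd1 : row_free (vecs_mx n 1 (fun i => under (z i))))
  (hwd2 : row_free (vecs_mx n 2 (fun i => under (z i))))
  (alpha1 alpha2 : 'rV[R]_n.+1)
  (ha1 : lastc alpha1 = 1)
  (ha1o : forall j : nat, (1 <= j <= n)%N -> dotv alpha1 (z j) = 0)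
  (ha2 : lastc alpha2 = 1)
  (ha2o : forall j : nat, (2 <= j <= n.+1)%N -> dotv alpha2 (z j) = 0) :
  enorm (alpha1 - alpha2) =
    (detLu z 2 (n - 1) * detL1d z) / (detLu z 1 n * detLu z 2 n).
Proof.
case: n hn z hind hwd1 hwd2 alpha1 alpha2 ha1 ha1o ha2 ha2o => [|[|m]] // _ z hind hwd1 hwd2 alpha1 alpha2 ha1 ha1o ha2 ha2o.
have -> : (m.+2 - 1 = m.+1)%N by rewrite subn1.
pose u i := under (z i).
pose v := under alpha1 - under alpha2.
have hv : forall j, (2 <= j <= m.+2)%N -> dotv v (u j) = 0.
  move=> j hj; rewrite dotvBl.
  have h1 := ha1o j ltac:(lia); have h2 := ha2o j ltac:(lia).
  rewrite dotv_split ha1 in h1; rewrite dotv_split ha2 in h2.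
  rewrite /u; lra.
have hc : dotv v (u 1%N) = - dotv alpha2 (z 1%N).
  have h1 := ha1o 1%N ltac:(lia); rewrite dotv_split ha1 in h1.
  rewrite dotvBl (dotv_split alpha2) ha2 /u; lra.
have -> : enorm (alpha1 - alpha2) = Num.sqrt (dotv v v).
  by rewrite /enorm dotv_split lastc_sub ha1 ha2 subrr mul0r addr0 under_sub.
rewrite /detLu /detL1d !pvol_sq /pvol.
rewrite -/u in hwd1 hwd2 *.
set U1 := vecs_mx m.+2 1 u; set U2 := vecs_mx m.+2 2 u.
set W := vecs_mx m.+1 2 u; set g := \det (W *m W^T).
have hg : g != 0.
  apply: (gram_ne0 hwd1) => i j; rewrite !mxE /= /bump /=.
  by rewrite add1n addSn.
pose f i := if i == 1%N then v else u i.
set N := vecs_mx m.+2 1 f.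
have fW : vecs_mx m.+1 2 f = W.
  by apply: vecs_mx_eq => i _; rewrite /f.
have hN1 : \det (N *m U1^T) = dotv v (u 1%N) * g.
  rewrite (det_row1 (i0:=0) (j0:=0)).
    by rewrite cofactor00 vecs_rc fW vecs_mulT /f.
  move=> j hj; rewrite vecs_mulT /f /= hv //.
  have := ord_ne0 hj; have := ltn_ord j; lia.
have hN2 : \det (N *m N^T) = dotv v v * g.
  rewrite (det_row1 (i0:=0) (j0:=0)).
    by rewrite cofactor00 vecs_rc fW vecs_mulT /f.
  move=> j hj; rewrite vecs_mulT /f /=.
  have hj' := ord_ne0 hj; have := ltn_ord j => hjn.
  rewrite (_ : (1 + j == 1)%N = false); last by lia.
  rewrite hv //; lia.
set Z := vecs_mx m.+3 1 z.
pose M2 : 'M[R]_(m.+3) := \matrix_(i, j) if (i < m.+2)%N then (j == i)%:R else alpha2 0 j.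
have hM2 : \det M2 = 1.
  rewrite det_trig.
    apply: big1 => i _; rewrite mxE; case: ifP => hi; first by rewrite eqxx.
    have -> : i = ord_max by apply/val_inj => /=; have := ltn_ord i; lia.
    exact: ha2.
  apply/is_trig_mxP => i j hij; rewrite mxE; case: ifP => hi.
    by rewrite -val_eqE /= gtn_eqF.
  have := ltn_ord j; lia.
set A := Z *m M2^T.
have hA1 : forall i (j : 'I_m.+3), (j < m.+2)%N -> A i j = z (1 + i)%N 0 j.
  move=> i j hj; rewrite mxE (bigD1 j) //= big1 ?addr0.
    by rewrite !mxE hj eqxx mulr1.
  by move=> k hk; rewrite !mxE hj (negbTE hk) mulr0.
have hA2 : forall i, A i ord_max = dotv (z (1 + i)%N) alpha2.
  move=> i; rewrite dotvE mxE; apply: eq_bigr => k _; rewrite !mxE /=.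
  by rewrite ltnn.
have hZ : \det Z = dotv alpha2 (z 1%N) * ((-1) ^+ (m.+2) * \det U2).
  have -> : \det Z = \det A by rewrite det_mulmx det_tr hM2 mulr1.
  rewrite (det_col1 (i0:=0) (j0:=ord_max)).
    rewrite hA2 dotvC /cofactor /= add0n; congr (_ * (_ * \det _)).
    apply/matrixP => i j; rewrite [LHS]mxE [LHS]mxE hA1; last by rewrite lift_max ltn_ord.
    rewrite !mxE lift0 add1n.
    congr (z _ 0 _); apply/val_inj; exact: lift_max.
  move=> i hi; rewrite hA2 dotvC ha2o //.
  have := ord_ne0 hi; have := ltn_ord i; lia.
have hdN1 : \det (N *m U1^T) = \det N * \det U1 by rewrite det_mulmx det_tr.
have hdN2 : \det (N *m N^T) = \det N ^+ 2 by rewrite det_mulmx det_tr expr2.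
have hD1 : \det U1 != 0 by rewrite -unitfE -unitmxE -row_free_unit.
have hD2 : \det U2 != 0 by rewrite -unitfE -unitmxE -row_free_unit.
have e : dotv v v = (\det Z / (\det U1 * \det U2)) ^+ 2 * g.
  have e1 : dotv v v = \det N ^+ 2 / g by rewrite -hdN2 hN2 mulfK.
  have e2 : \det N = dotv v (u 1%N) * g / \det U1 by rewrite -hN1 hdN1 mulfK.
  rewrite e1 e2 hc hZ -signr_odd /=; case: (odd m); rewrite /= ?expr0 ?expr1;
    field; by rewrite ?hg ?hD1 ?hD2.
rewrite e sqrtrM ?sqr_ge0 // sqrtr_sqr normf_div normrM.
by rewrite mulrC mulrA.
Qed.
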